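(* Let $f:\mathbb{R}^n\times\mathbb{R}_{\ge 0}\to\mathbb{R}^n$ be smooth and let $\gamma_1,\dots,\gamma_s$ be linear operators such that $f$ is $\gamma_i$-equivariant for each $i$; set $\mathcal{M}_i=\{x:\gamma_i x=x\}$ and $\mathcal{M}_\cap=\bigcap_{i=1}^s\mathcal{M}_i$, and assume $\mathcal{M}_\cap\neq\{0\}$. If either (i) $\dot x=f(x,t)$ is contracting towards each subspace $\mathcal{M}_i$, $i=1,\dots,s$, or (ii) $\dot x=f(x,t)$ is contracting, then every solution of $\dot x=f(x,t)$ converges to $\mathcal{M}_\cap$ as $t\to+\infty$, i.e. all solutions asymptotically exhibit the symmetry defined by $\mathcal{M}_\cap$.
   Context: $f$ is $\gamma$-equivariant if $f(\gamma x,t)=\gamma f(x,t)$ for all $x,t$; then $\mathcal{M}_\gamma=\{x:\gamma x=x\}$ is flow-invariant. Given a vector norm with induced matrix norm $\|\cdot\|$, the matrix measure is $\mu(A)=\lim_{h\searrow0}\frac1h(\|I+hA\|-1)$. The system $\dot x=f(x,t)$ is contracting if there exist a matrix measure $\mu$ (possibly induced by a weighted norm $|\Theta x|_i$, $i\in\{1,2,\infty\}$, $\Theta$ constant invertible) and $\lambda>0$ with $\mu(\partial f/\partial x(x,t))\le-\lambda$ for all $x$ and $t\ge0$; then any two trajectories converge exponentially to each other. The system is contracting towards a flow-invariant linear subspace $\mathcal{M}$ if all its trajectories converge exponentially towards $\mathcal{M}$. *)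

(* Defs.v *)
From Stdlib Require Import Reals.
From mathcomp Require Import all_boot.
Set Implicit Arguments.
Unset Strict Implicit.
Unset Printing Implicit Defensive.
Open Scope R_scope.

Definition vec (n : nat) := 'I_n -> R.
Definition mat (n : nat) := 'I_n -> 'I_n -> R.

Definition upd (I : eqType) (p : I -> R) (i : I) (h : R) : I -> R :=
  fun j => if j == i then h else p j.

Definition cont_fun (I : Type) (g : (I -> R) -> R) : Prop :=
  forall (p : I -> R) eps, 0 < eps -> exists delta, 0 < delta /\
    forall q : I -> R, (forall i, Rabs (q i - p i) < delta) -> Rabs (g q - g p) < eps.

Fixpoint Ck (I : eqType) (k : nat) (g : (I -> R) -> R) : Prop :=
  match k with
  | O => cont_fun g
  | S k' => cont_fun g /\ exists dg : I -> (I -> R) -> R,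
      (forall i p, derivable_pt_lim (fun h => g (upd p i h)) (p i) (dg i p)) /\
      forall i, Ck k' (dg i)
  end.

Definition smooth_fun (I : eqType) (g : (I -> R) -> R) : Prop := forall k, Ck k g.

(* f : R^n x R -> R^n is smooth jointly in (x,t); the variable t is index None *)
Definition smooth_field (n : nat) (f : vec n -> R -> vec n) : Prop :=
  forall i : 'I_n,
    smooth_fun (fun p : option 'I_n -> R => f (fun j => p (Some j)) (p None) i).

Definition is_linear (n : nat) (g : vec n -> vec n) : Prop :=
  (forall x y : vec n, g (fun i => x i + y i) = (fun i => g x i + g y i)) /\
  (forall (c : R) (x : vec n), g (fun i => c * x i) = (fun i => c * g x i)).

Definition equivariant (n : nat) (f : vec n -> R -> vec n) (g : vec n -> vec n) : Prop :=
  forall x t, 0 <= t -> f (g x) t = g (f x t).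

Definition fix_space (n : nat) (g : vec n -> vec n) : vec n -> Prop := fun x => g x = x.

Definition Mcap (n s : nat) (gam : 'I_s -> vec n -> vec n) : vec n -> Prop :=
  fun x => forall i, gam i x = x.

Definition is_solution (n : nat) (f : vec n -> R -> vec n) (x : R -> vec n) (t0 : R) : Prop :=
  0 <= t0 /\ forall t, t0 < t -> forall i,
    derivable_pt_lim (fun s => x s i) t (f (x t) t i).

Definition converges_to (n : nat) (x : R -> vec n) (M : vec n -> Prop) : Prop :=
  forall eps, 0 < eps -> exists T, forall t, T <= t ->
    exists y, M y /\ forall i, Rabs (x t i - y i) < eps.

Definition converges_exp (n : nat) (x : R -> vec n) (t0 : R) (M : vec n -> Prop) : Prop :=
  exists C lam, 0 < lam /\ forall t, t0 < t ->
    exists y, M y /\ forall i, Rabs (x t i - y i) <= C * exp (- lam * t).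

Definition contracting_towards (n : nat) (f : vec n -> R -> vec n) (M : vec n -> Prop) : Prop :=
  forall x t0, is_solution f x t0 -> converges_exp x t0 M.

Definition is_norm (n : nat) (N : vec n -> R) : Prop :=
  (forall x, 0 <= N x) /\
  (forall x, N x = 0 -> forall i, x i = 0) /\
  (forall c x, N (fun i => c * x i) = Rabs c * N x) /\
  (forall x y, N (fun i => x i + y i) <= N x + N y).

Definition mxv (n : nat) (A : mat n) (x : vec n) : vec n :=
  fun i => \big[Rplus/0]_(j < n) (A i j * x j).

Definition is_opnorm (n : nat) (N : vec n -> R) (A : mat n) (c : R) : Prop :=
  is_lub (fun r => exists x, N x = 1 /\ r = N (mxv A x)) c.

Definition id_plus (n : nat) (h : R) (A : mat n) : mat n :=
  fun i j => (if i == j then 1 else 0) + h * A i j.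

Definition is_matrix_measure (n : nat) (N : vec n -> R) (A : mat n) (m : R) : Prop :=
  forall eps, 0 < eps -> exists delta, 0 < delta /\
    forall h c, 0 < h < delta -> is_opnorm N (id_plus h A) c ->
      Rabs ((c - 1) / h - m) < eps.

Definition is_jacobian (n : nat) (f : vec n -> R -> vec n) (x : vec n) (t : R) (A : mat n) : Prop :=
  forall i j, derivable_pt_lim (fun h => f (upd x j h) t i) (x j) (A i j).

Definition contracting (n : nat) (f : vec n -> R -> vec n) : Prop :=
  exists (N : vec n -> R) (lam : R), is_norm N /\ 0 < lam /\
    forall x t A, 0 <= t -> is_jacobian f x t A ->
      exists m, is_matrix_measure N A m /\ m <= - lam.

(* Main.v *)
Require Import Defs.
From HB Require Import structures.
From Stdlib Require Import Reals Lra ClassicalEpsilon Classical FunctionalExtensionality.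
From mathcomp Require Import all_boot all_algebra.
Set Implicit Arguments. Unset Strict Implicit. Unset Printing Implicit Defensive.
Open Scope R_scope.

Definition eqr (a b : R) : bool := if Req_EM_T a b then true else false.
Lemma eqrP : Equality.axiom eqr.
Proof. move=> a b; rewrite /eqr; case: Req_EM_T => H; by constructor. Qed.
HB.instance Definition _ := hasDecEq.Build R eqrP.

Definition rfind (P : pred R) (n : nat) : option R :=
  match excluded_middle_informative (exists x, P x) with
  | left H => Some (proj1_sig (constructive_indefinite_description _ H))
  | right _ => None end.
Lemma rfind_c P n x : rfind P n = Some x -> P x.
Proof. rewrite /rfind; case: excluded_middle_informative => // H [<-].
by case: constructive_indefinite_description. Qed.
Lemma rfind_ex (P : pred R) : (exists x, P x) -> exists n, rfind P n.
Proof. move=> H; exists 0%N; rewrite /rfind; case: excluded_middle_informative => //. Qed.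
Lemma rfind_ext (P Q : pred R) : P =1 Q -> rfind P =1 rfind Q.
Proof. move=> H; have -> : P = Q by apply: functional_extensionality. by []. Qed.
HB.instance Definition _ := hasChoice.Build R rfind_c rfind_ex rfind_ext.

Lemma RplusA' : associative Rplus. Proof. move=>*; ring. Qed.
Lemma RplusC' : commutative Rplus. Proof. move=>*; ring. Qed.
Lemma Rplus0' : left_id 0 Rplus. Proof. move=>*; ring. Qed.
Lemma RplusN' : left_inverse 0 Ropp Rplus. Proof. move=>*; ring. Qed.
HB.instance Definition _ := GRing.isZmodule.Build R RplusA' RplusC' Rplus0' RplusN'.
Lemma RmultA' : associative Rmult. Proof. move=>*; ring. Qed.
Lemma RmultC' : commutative Rmult. Proof. move=>*; ring. Qed.
Lemma Rmult1' : left_id 1 Rmult. Proof. move=>*; ring. Qed.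
Lemma RmultDl' : left_distributive Rmult (@GRing.add R). Proof. move=>*; rewrite /GRing.add /=; ring. Qed.
Lemma R1n0 : (1 : R) != (0 : R). Proof. apply/eqP; exact: R1_neq_R0. Qed.
HB.instance Definition _ := GRing.Zmodule_isComNzRing.Build R RmultA' RmultC' Rmult1' RmultDl' R1n0.
Definition Rinv' (x : R) := if x == 0 then 0 else Rinv x.
Lemma RmulVf : forall x : R, x != 0 -> GRing.mul (Rinv' x) x = 1.
Proof. move=> x /eqP H; rewrite /Rinv'; case: eqP => // _. rewrite /GRing.mul /=. field. exact H. Qed.
Lemma Rinv0' : Rinv' 0 = 0. Proof. by rewrite /Rinv' eqxx. Qed.
HB.instance Definition _ := GRing.ComNzRing_isField.Build R RmulVf Rinv0'.


HB.instance Definition _ := Monoid.isComLaw.Build R 0 Rplus RplusA' RplusC' Rplus0'.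



Lemma sum_le n (F G : 'I_n -> R) : (forall j, F j <= G j) ->
  \big[Rplus/0]_(j < n) F j <= \big[Rplus/0]_(j < n) G j.
Proof. move=> H; elim/big_ind2: _ => //; [lra | move=> *; lra]. Qed.

Lemma sum_nonneg n (F : 'I_n -> R) : (forall j, 0 <= F j) ->
  0 <= \big[Rplus/0]_(j < n) F j.
Proof. move=> H; elim/big_ind: _ => //; [lra | move=> *; lra]. Qed.

Lemma sum_mulr n (c : R) (F : 'I_n -> R) :
  c * \big[Rplus/0]_(j < n) F j = \big[Rplus/0]_(j < n) (c * F j).
Proof. elim/big_rec2: _ => [|j a b _ <-]; ring. Qed.

Lemma sum_mull n (c : R) (F : 'I_n -> R) :
  (\big[Rplus/0]_(j < n) F j) * c = \big[Rplus/0]_(j < n) (F j * c).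
Proof. elim/big_rec2: _ => [|j a b _ <-]; ring. Qed.

Lemma sum_add n (F G : 'I_n -> R) :
  \big[Rplus/0]_(j < n) (F j + G j) = \big[Rplus/0]_(j < n) F j + \big[Rplus/0]_(j < n) G j.
Proof. by rewrite big_split. Qed.

Lemma sum_opp n (F : 'I_n -> R) :
  Ropp (\big[Rplus/0]_(j < n) F j) = \big[Rplus/0]_(j < n) (- F j).
Proof. elim/big_rec2: _ => [|j a b _ <-]; ring. Qed.

Lemma sum_zero n : \big[Rplus/0]_(j < n) (0:R) = 0.
Proof. by rewrite big1. Qed.

Lemma Rabs_sum n (F : 'I_n -> R) :
  Rabs (\big[Rplus/0]_(j < n) F j) <= \big[Rplus/0]_(j < n) Rabs (F j).
Proof.
elim/big_ind2: _.
- rewrite Rabs_R0; lra.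
- move=> a b c d H1 H2; eapply Rle_trans; [apply Rabs_triang|lra].
- move=> i _; lra.
Qed.

Lemma le_addr_nonneg (a b : R) : 0 <= b -> a <= a + b.
Proof. lra. Qed.

Lemma Rabs_divp (a K : R) : 0 < K -> Rabs (a / K) = Rabs a / K.
Proof. move=> HK; rewrite /Rdiv Rabs_mult Rabs_inv (Rabs_right K) //; lra. Qed.

Lemma sum_tele (K : nat) (a : nat -> R) :
  \big[Rplus/0]_(k < K) (a k.+1 - a k) = a K - a 0%N.
Proof. elim: K => [|K IH]; first by rewrite big_ord0 /=; ring. rewrite big_ord_recr IH /=; ring. Qed.

Import GRing.Theory.
Open Scope ring_scope.
Open Scope R_scope.

Lemma kerbound (n m : nat) (L : 'I_n -> 'I_m -> R) :
  exists K, 0 <= K /\ forall (z : 'I_n -> R) (b : R),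
    (forall k, Rabs (\big[Rplus/0]_(j < n) (z j * L j k)) <= b) ->
    exists y : 'I_n -> R, (forall k, \big[Rplus/0]_(j < n) (y j * L j k) = 0) /\
      forall j, Rabs (z j - y j) <= K * b.
Proof.
pose Lm : 'M[R]_(n, m) := \matrix_(j, k) L j k.
pose P := pinvmx Lm.
exists (\big[Rplus/0]_(k < m) \big[Rplus/0]_(j < n) Rabs (P k j)); split.
  by apply: sum_nonneg => k; apply: sum_nonneg => j; apply: Rabs_pos.
move=> z b Hb.
pose zr : 'rV[R]_n := \row_j z j.
pose yr := (zr - zr *m Lm *m P)%R.
have Hy : (yr *m Lm = 0)%R.
  rewrite /yr mulmxBl mulmxKpV ?submxMl //.
  by rewrite GRing.subrr.
exists (fun j => yr ord0 j); split.
  move=> k; have H := congr1 (fun M : 'M[R]_(1,m) => M ord0 k) Hy; rewrite /= !mxE in H.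
  etransitivity; [|exact H]. apply: eq_bigr => j _; rewrite /Lm !mxE; reflexivity.
move=> j.
have -> : z j - yr ord0 j = (zr *m Lm *m P)%R ord0 j.
  by rewrite /yr !mxE /GRing.add /GRing.opp /=; ring.
rewrite mxE.
eapply Rle_trans; first by apply: Rabs_sum.
rewrite sum_mull.
apply: sum_le => k.
rewrite Rabs_mult Rmult_comm.
have Hk : Rabs ((zr *m Lm)%R ord0 k) <= b.
  rewrite mxE; eapply Rle_trans; last by apply: (Hb k).
  right; congr Rabs; apply: eq_bigr => i _; by rewrite !mxE.
have Hp : Rabs (P k j) <= \big[Rplus/0]_(j0 < n) Rabs (P k j0).
  rewrite (bigD1 j) //=.
  have : 0 <= \big[Rplus/0]_(i < n | i != j) Rabs (P k i).
    by elim/big_ind: _ => //; [lra | move=> *; lra | move=> i _; apply: Rabs_pos].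
  move=> H. rewrite -{1}(Rplus_0_r (Rabs (P k j))). apply Rplus_le_compat_l; exact H.
have := Rabs_pos (P k j); have := Rabs_pos ((zr *m Lm)%R ord0 k).
move=> H1 H2; apply Rmult_le_compat => //.
Qed.

Definition ev (n : nat) (j : 'I_n) : vec n := fun i => if i == j then 1 else 0.

Lemma sum_ev n (z : vec n) i : \big[Rplus/0]_(j < n) (z j * ev j i) = z i.
Proof.
rewrite (bigD1 i) //= big1; first by rewrite /ev eqxx; ring.
move=> j Hj; rewrite /ev; case: eqP => [E|_]; last ring.
by rewrite E eqxx in Hj.
Qed.

Lemma lin0 n (g : vec n -> vec n) : is_linear g -> g (fun _ => 0) = fun _ => 0.
Proof.
move=> [_ Hm]; have := Hm 0 (fun _ => 0).
have -> : (fun i : 'I_n => 0 * (fun _ : 'I_n => 0) i) = (fun _ => 0).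
  by apply: functional_extensionality => i; ring.
move=> ->; apply: functional_extensionality => i; ring.
Qed.

Lemma lin_sum n (g : vec n -> vec n) (r : seq 'I_n) (F : 'I_n -> vec n) :
  is_linear g ->
  g (fun i => \big[Rplus/0]_(j <- r) F j i) = fun i => \big[Rplus/0]_(j <- r) g (F j) i.
Proof.
move=> Hg; elim: r => [|a r IH].
  have -> : (fun i : 'I_n => \big[Rplus/0]_(j <- [::]) F j i) = (fun _ => 0).
    by apply: functional_extensionality => i; rewrite big_nil.
  rewrite lin0 //; apply: functional_extensionality => i; by rewrite big_nil.
have -> : (fun i : 'I_n => \big[Rplus/0]_(j <- a :: r) F j i) =
  (fun i => F a i + (fun i => \big[Rplus/0]_(j <- r) F j i) i).
  by apply: functional_extensionality => i; rewrite big_cons.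
rewrite (proj1 Hg) IH; apply: functional_extensionality => i; by rewrite big_cons.
Qed.

Lemma lin_repr n (g : vec n -> vec n) (z : vec n) i : is_linear g ->
  g z i = \big[Rplus/0]_(j < n) (z j * g (ev j) i).
Proof.
move=> Hg.
have Ez : z = fun i => \big[Rplus/0]_(j < n) (fun j => fun i => z j * ev j i) j i.
  by apply: functional_extensionality => k; rewrite sum_ev.
rewrite {1}Ez (lin_sum _ _ Hg) /=.
apply: eq_bigr => j _. by rewrite (proj2 Hg).
Qed.

Lemma lin_bound n (g : vec n -> vec n) : is_linear g ->
  exists G, 0 <= G /\ forall z b, (forall j, Rabs (z j) <= b) -> forall i, Rabs (g z i) <= G * b.
Proof.
move=> Hg; exists (\big[Rplus/0]_(i < n) \big[Rplus/0]_(j < n) Rabs (g (ev j) i)); split.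
  by apply: sum_nonneg => i; apply: sum_nonneg => j; apply: Rabs_pos.
move=> z b Hb i.
have b0 : 0 <= b.
  case: n g Hg z Hb i => [|n'] g Hg z Hb i; first by case: i.
  have := Hb ord0; have := Rabs_pos (z ord0); lra.
rewrite lin_repr //.
eapply Rle_trans; first by apply: Rabs_sum.
have H1 : \big[Rplus/0]_(j < n) Rabs (z j * g (ev j) i) <=
          \big[Rplus/0]_(j < n) (Rabs (g (ev j) i) * b).
  apply: sum_le => j; rewrite Rabs_mult Rmult_comm.
  apply: Rmult_le_compat_l; [apply: Rabs_pos | apply: Hb].
eapply Rle_trans; first exact: H1.
rewrite -sum_mull; apply: Rmult_le_compat_r => //.
rewrite [X in _ <= X](bigD1 i) //=.
have : 0 <= \big[Rplus/0]_(i0 < n | i0 != i) \big[Rplus/0]_(j < n) Rabs (g (ev j) i0).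
  elim/big_ind: _ => //; [lra | move=> *; lra | move=> k _; apply: sum_nonneg => j; apply: Rabs_pos].
exact: le_addr_nonneg.
Qed.

Lemma final (n s : nat) (gam : 'I_s -> vec n -> vec n) (x : R -> vec n) :
  (forall i, is_linear (gam i)) ->
  (forall eps, 0 < eps -> exists T, forall t, T <= t -> forall i l,
       Rabs (gam i (x t) l - x t l) < eps) ->
  converges_to x (Mcap gam).
Proof.
move=> Hlin Hc.
pose L (j : 'I_n) (k : 'I_#|{: 'I_s * 'I_n}|) :=
  let p := enum_val k in gam p.1 (ev j) p.2 - ev j p.2.
have HL : forall z k, \big[Rplus/0]_(j < n) (z j * L j k) =
   gam (enum_val k).1 z (enum_val k).2 - z (enum_val k).2.
  move=> z k; rewrite lin_repr // -(sum_ev z (enum_val k).2).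
  rewrite /Rminus sum_opp -sum_add; apply: eq_bigr => j _; rewrite /L /=; ring.
have [K [K0 HK]] := kerbound L.
move=> eps Heps.
have [T HT] := Hc (eps / (K + 1)) ltac:(apply: Rdiv_lt_0_compat; lra).
exists T => t Ht.
have Hb : forall k, Rabs (\big[Rplus/0]_(j < n) (x t j * L j k)) <= eps / (K + 1).
  move=> k; rewrite HL; left; exact: HT.
have [y [Hy Hd]] := HK (x t) (eps / (K + 1)) Hb.
exists y; split.
  move=> i; apply: functional_extensionality => l.
  have := Hy (enum_rank (i, l)); rewrite HL enum_rankK /=; lra.
move=> j; eapply Rle_lt_trans; first by apply: Hd.
have : K * (eps / (K + 1)) < eps.
  rewrite /Rdiv -Rmult_assoc; apply (Rmult_lt_reg_r (K + 1)); first lra.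
  rewrite Rmult_assoc Rinv_l; lra.
lra.
Qed.

Lemma lin_sub n (g : vec n -> vec n) (x y : vec n) l : is_linear g ->
  g (fun k => x k - y k) l = g x l - g y l.
Proof.
move=> Hg; rewrite !(lin_repr _ _ Hg) /Rminus sum_opp -sum_add.
apply: eq_bigr => j _; ring.
Qed.

Lemma fin_T (s : nat) (Q : 'I_s -> R -> Prop) :
  (forall i, exists T, forall t, T <= t -> Q i t) ->
  exists T, forall t, T <= t -> forall i, Q i t.
Proof.
move=> H.
pose Tf i := proj1_sig (constructive_indefinite_description _ (H i)).
have HTf : forall i t, Tf i <= t -> Q i t.
  move=> i; rewrite /Tf; by case: constructive_indefinite_description.
exists (\big[Rplus/0]_(i < s) Rabs (Tf i)) => t Ht i; apply: HTf.
apply: Rle_trans Ht; apply: Rle_trans (Rle_abs _) _.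
rewrite (bigD1 i) //=; apply: le_addr_nonneg.
elim/big_ind: _ => //; [lra | move=> *; lra | move=> k _; apply: Rabs_pos].
Qed.

Lemma fin_delta (s : nat) (Q : 'I_s -> R -> Prop) :
  (forall i, exists d, 0 < d /\ forall h, 0 < h < d -> Q i h) ->
  exists d, 0 < d /\ forall h, 0 < h < d -> forall i, Q i h.
Proof.
move=> H.
pose df i := proj1_sig (constructive_indefinite_description _ (H i)).
have Hdf : forall i, 0 < df i /\ forall h, 0 < h < df i -> Q i h.
  move=> i; rewrite /df; by case: constructive_indefinite_description.
pose S := \big[Rplus/0]_(i < s) / df i.
have S0 : 0 <= S.
  apply: sum_nonneg => i; left; apply: Rinv_0_lt_compat; exact: (proj1 (Hdf i)).
exists (/ (S + 1)); split; first by apply: Rinv_0_lt_compat; lra.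
move=> h [h0 hd] i; apply: (proj2 (Hdf i)); split => //.
apply: Rlt_le_trans hd _.
have di := proj1 (Hdf i).
have Hi : / df i <= S.
  rewrite /S (bigD1 i) //=; apply: le_addr_nonneg.
  elim/big_ind: _ => //; [lra | move=> *; lra | move=> k _; left; apply: Rinv_0_lt_compat; exact: (proj1 (Hdf k))].
rewrite -(Rinv_inv (df i)); apply: Rinv_le_contravar.
  by apply: Rinv_0_lt_compat.
lra.
Qed.

Lemma exp_small (C lam eps : R) : 0 < lam -> 0 < eps ->
  exists T, forall t, T <= t -> C * exp (- lam * t) < eps.
Proof.
move=> Hl He.
case: (Rle_lt_dec C 0) => HC.
  exists 0 => t _; have := exp_pos (- lam * t); nra.
exists ((Rabs (ln (eps / C)) + 1) / lam) => t Ht.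
have H1 : - lam * t < ln (eps / C).
  have : (Rabs (ln (eps / C)) + 1) <= lam * t.
    apply (Rmult_le_reg_r (/ lam)); first by apply: Rinv_0_lt_compat.
    replace (lam * t * / lam) with t by (field; lra). exact Ht.
  have := Rle_abs (- ln (eps / C)); rewrite Rabs_Ropp; lra.
have H2 : exp (- lam * t) < eps / C.
  rewrite -(exp_ln (eps / C)); first exact: exp_increasing.
  apply: Rdiv_lt_0_compat; lra.
apply (Rmult_lt_reg_r (/ C)); first by apply: Rinv_0_lt_compat.
rewrite Rmult_comm -Rmult_assoc Rinv_l; lra.
Qed.

Lemma case1 (n s : nat) (f : vec n -> R -> vec n) (gam : 'I_s -> vec n -> vec n) :
  (forall i, is_linear (gam i)) ->
  (forall i, contracting_towards f (fix_space (gam i))) ->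
  forall (x : R -> vec n) (t0 : R), is_solution f x t0 -> converges_to x (Mcap gam).
Proof.
move=> Hlin Hc x t0 Hx.
apply: final => // eps Heps.
apply (@fin_T s (fun i t => forall l, Rabs (gam i (x t) l - x t l) < eps)) => i.
have [C [lam [Hlam HC]]] := Hc i x t0 Hx.
have [G [G0 HG]] := lin_bound (Hlin i).
have [T HT] := exp_small C Hlam (eps := eps / (G + 1))
   ltac:(apply: Rdiv_lt_0_compat; lra).
exists (Rmax T (t0 + 1)) => t Ht l.
have [y [Hy Hd]] := HC t ltac:(have := Rmax_r T (t0 + 1); lra).
have E : gam i (x t) l - x t l = gam i (fun k => x t k - y k) l - (x t l - y l).
  rewrite lin_sub //; rewrite /fix_space in Hy; rewrite Hy; ring.
rewrite E.
have Hb := HG (fun k => x t k - y k) (C * exp (- lam * t)) Hd l.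
have Hs := HT t ltac:(have := Rmax_l T (t0 + 1); lra).
have Hl := Hd l.
apply: Rle_lt_trans; first by apply: Rabs_triang.
rewrite Rabs_Ropp.
have : (G + 1) * (C * exp (- lam * t)) < eps.
  apply (Rmult_lt_reg_r (/ (G + 1))); first by apply: Rinv_0_lt_compat; lra.
  rewrite Rmult_comm -Rmult_assoc Rinv_l; [lra | lra].
lra.
Qed.

Section NormFacts.
Variable n : nat.
Variable N : vec n -> R.
Hypothesis HN : is_norm N.

Lemma N_ext (x y : vec n) : (forall i, x i = y i) -> N x = N y.
Proof. move=> H; f_equal; exact: functional_extensionality. Qed.

Lemma N_pos x : 0 <= N x. Proof. exact: (proj1 HN). Qed.
Lemma N_zero x : N x = 0 -> forall i, x i = 0. Proof. exact: (proj1 (proj2 HN)). Qed.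
Lemma N_scale c x : N (fun i => c * x i) = Rabs c * N x. Proof. exact: (proj1 (proj2 (proj2 HN))). Qed.
Lemma N_tri x y : N (fun i => x i + y i) <= N x + N y. Proof. exact: (proj2 (proj2 (proj2 HN))). Qed.

Lemma N_0 x : (forall i, x i = 0) -> N x = 0.
Proof.
move=> H; rewrite (@N_ext x (fun i => 0 * x i)); last by move=> i; rewrite H; ring.
by rewrite N_scale Rabs_R0 Rmult_0_l.
Qed.

Lemma N_opp x : N (fun i => - x i) = N x.
Proof.
rewrite (@N_ext _ (fun i => (-1) * x i)); last by move=> i; ring.
by rewrite N_scale Rabs_Ropp Rabs_R1 Rmult_1_l.
Qed.

Lemma N_sym x y : N (fun i => x i - y i) = N (fun i => y i - x i).
Proof. rewrite -N_opp; apply: N_ext => i; ring. Qed.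

Lemma N_tri_sub x y z : N (fun i => x i - z i) <= N (fun i => x i - y i) + N (fun i => y i - z i).
Proof.
rewrite (@N_ext _ (fun i => (fun i => x i - y i) i + (fun i => y i - z i) i)); last by move=> i; ring.
exact: N_tri.
Qed.

Lemma N_sum (r : seq 'I_n) (F : 'I_n -> vec n) :
  N (fun i => \big[Rplus/0]_(j <- r) F j i) <= \big[Rplus/0]_(j <- r) N (F j).
Proof.
elim: r => [|a r IH].
  rewrite big_nil N_0 //; first lra. by move=> i; rewrite big_nil.
rewrite big_cons (@N_ext _ (fun i => F a i + (fun i => \big[Rplus/0]_(j <- r) F j i) i)).
  apply: Rle_trans; first exact: N_tri. lra.
by move=> i; rewrite big_cons.
Qed.

Lemma N_upper (x : vec n) : N x <= \big[Rplus/0]_(j < n) (Rabs (x j) * N (ev j)).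
Proof.
rewrite (@N_ext x (fun i => \big[Rplus/0]_(j < n) (fun j => fun i => x j * ev j i) j i)).
  apply: Rle_trans; first exact: N_sum.
  by right; apply: eq_bigr => j _; rewrite N_scale.
by move=> i; rewrite sum_ev.
Qed.

Lemma N_ub : exists U, 0 <= U /\ forall x b, (forall j, Rabs (x j) <= b) -> N x <= U * b.
Proof.
exists (\big[Rplus/0]_(j < n) N (ev j)); split.
  by apply: sum_nonneg => j; apply: N_pos.
move=> x b Hb; apply: Rle_trans; first exact: N_upper.
rewrite sum_mull; apply: sum_le => j; rewrite Rmult_comm.
apply: Rmult_le_compat_l; [exact: N_pos | exact: Hb].
Qed.

End NormFacts.

Lemma small_inv (eps : R) : 0 < eps ->
  exists M : nat, forall m : nat, (M <= m)%N -> / (INR m + 1) < eps.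
Proof.
move=> He; have [M HM] := INR_unbounded (/ eps).
exists M => m /leP Hm.
have H1 : INR M <= INR m by apply: le_INR.
have H2 : 0 < INR m + 1 by have := pos_INR m; lra.
rewrite -(Rinv_inv eps); apply: Rinv_lt_contravar.
  apply: Rmult_lt_0_compat => //; exact: Rinv_0_lt_compat.
lra.
Qed.

Lemma inv_pos_nat (m : nat) : 0 < / (INR m + 1).
Proof. apply: Rinv_0_lt_compat; have := pos_INR m; lra. Qed.

Section Lower.
Variable n : nat.
Variable N : vec n -> R.
Hypothesis HN : is_norm N.

Definition Hk (k : nat) (x : vec n) := forall j : 'I_n, (k <= j)%N -> x j = 0.

Lemma lb_claim k (kn : (k < n)%N) c : 0 < c ->
  (forall x, Hk k x -> forall j, c * Rabs (x j) <= N x) ->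
  exists d, 0 < d /\ forall h, Hk k h -> d <= N (fun i => ev (Ordinal kn) i - h i).
Proof.
move=> c0 Hc.
set e := ev (Ordinal kn).
apply: NNPP => Hno.
have Hall : forall m : nat, exists h, Hk k h /\ N (fun i => e i - h i) < / (INR m + 1).
  move=> m; apply: NNPP => H2; apply: Hno; exists (/ (INR m + 1)); split.
    exact: inv_pos_nat.
  move=> h Hh; apply: Rnot_lt_le => H3; apply: H2; by exists h.
pose hs m := proj1_sig (constructive_indefinite_description _ (Hall m)).
have Hhs : forall m, Hk k (hs m) /\ N (fun i => e i - hs m i) < / (INR m + 1).
  move=> m; exact: (proj2_sig (constructive_indefinite_description _ (Hall m))).
have [U [U0 HU]] := N_ub HN.
have Hcau : forall j, Cauchy_crit (fun m => hs m j).
  move=> j eps He.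
  have [M HM] := @small_inv (eps * c / 2) ltac:(apply: Rdiv_lt_0_compat; [nra|lra]).
  exists M => m l Hm Hl.
  have Hm' := HM m (introT leP Hm); have Hl' := HM l (introT leP Hl).
  rewrite /Rdist.
  have Hd : Hk k (fun i => hs m i - hs l i).
    move=> i Hi; rewrite (proj1 (Hhs m) i Hi) (proj1 (Hhs l) i Hi); ring.
  have H1 := Hc _ Hd j.
  have H2 := N_tri_sub HN (hs m) e (hs l).
  have H3 : N (fun i => hs m i - e i) = N (fun i => e i - hs m i) by apply: N_sym.
  have H4 := proj2 (Hhs m); have H5 := proj2 (Hhs l).
  apply (Rmult_lt_reg_l c) => //.
  simpl in H1. lra.
pose hl j := proj1_sig (R_complete _ (Hcau j)).
have Hhl : forall j, Un_cv (fun m => hs m j) (hl j).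
  move=> j; rewrite /hl; by case: R_complete.
have Hlk : Hk k hl.
  move=> j Hj; apply: (UL_sequence (fun m => hs m j)) => //.
  move=> eps He; exists 0%nat => m _; rewrite (proj1 (Hhs m) j Hj) /Rdist Rminus_0_r Rabs_R0; lra.
have Hz : N (fun i => e i - hl i) = 0.
  apply: Rle_antisym; last exact: N_pos.
  apply: Rnot_lt_le => Hpos.
  set eta := N (fun i => e i - hl i) in Hpos.
  have [M1 HM1] := @small_inv (eta / 2) ltac:(lra).
  have HMj : forall j : 'I_n, exists M : nat, forall m, (M <= m)%N ->
       Rabs (hs m j - hl j) < eta / (2 * (U + 1)).
    move=> j; have [M HM] := Hhl j (eta / (2 * (U + 1))) ltac:(apply: Rdiv_lt_0_compat; lra).
    exists M => m /leP Hm; exact: HM.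
  pose Mf j := proj1_sig (constructive_indefinite_description _ (HMj j)).
  have HMf : forall j m, (Mf j <= m)%N -> Rabs (hs m j - hl j) < eta / (2 * (U + 1)).
    move=> j; rewrite /Mf; by case: constructive_indefinite_description.
  pose m := maxn M1 (\max_(j < n) Mf j).
  have Hm1 := HM1 m (leq_maxl _ _).
  have Hmj : forall j, Rabs (hs m j - hl j) <= eta / (2 * (U + 1)).
    move=> j; left; apply: HMf; apply: leq_trans (leq_maxr _ _).
    exact: (leq_bigmax j).
  have H1 := HU _ _ Hmj.
  have H2 := N_tri_sub HN e (hs m) hl.
  have H3 := proj2 (Hhs m).
  have H4 : U * (eta / (2 * (U + 1))) < eta / 2.
    apply (Rmult_lt_reg_r (2 * (U + 1))); first lra.
    have -> : U * (eta / (2 * (U + 1))) * (2 * (U + 1)) = U * eta by field; lra.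
    have -> : eta / 2 * (2 * (U + 1)) = (U + 1) * eta by field.
    nra.
  rewrite -/eta in H2. lra.
have := N_zero HN Hz (Ordinal kn).
rewrite (Hlk (Ordinal kn) (leqnn k)) /e /ev eqxx; lra.
Qed.

End Lower.

Section Lower2.
Variable n : nat.
Variable N : vec n -> R.
Hypothesis HN : is_norm N.

Lemma lb_step k (kn : (k < n)%N) :
  (exists c, 0 < c /\ forall x, Hk k x -> forall j, c * Rabs (x j) <= N x) ->
  (exists c, 0 < c /\ forall x, Hk k.+1 x -> forall j, c * Rabs (x j) <= N x).
Proof.
move=> [c [c0 Hc]].
have [d [d0 Hd]] := lb_claim HN kn c0 Hc.
set jk := Ordinal kn in Hd.
set e := ev jk in Hd.
have Ne0 := N_pos HN e.
pose q := 1 + N e / d.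
have q1 : 1 <= q.
  rewrite /q; have : 0 <= N e / d by apply: Rmult_le_pos => //; left; apply: Rinv_0_lt_compat.
  lra.
exists (Rmin d (c / q)); split.
  apply: Rmin_pos => //; apply: Rdiv_lt_0_compat; lra.
move=> x Hx.
pose a := x jk.
pose h := fun i => x i - a * e i.
have Hh : Hk k h.
  move=> j Hj; rewrite /h /e /ev.
  case: eqP => [->|Hne]; first by rewrite /a; ring.
  rewrite Hx; first ring.
  rewrite ltn_neqAle Hj andbT; apply/eqP => E; apply: Hne; apply: val_inj; by rewrite /= E.
have Ha : d * Rabs a <= N x.
  case: (Req_dec a 0) => a0; first by rewrite a0 Rabs_R0 Rmult_0_r; exact: N_pos.
  have H1 := Hd (fun i => - h i / a) ltac:(move=> j Hj; rewrite Hh //; field).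
  rewrite (@N_ext _ N x (fun i => a * (fun i => e i - (fun i => - h i / a) i) i)); last first.
    by move=> i; rewrite /h /=; field.
  rewrite N_scale //.
  rewrite Rmult_comm; apply: Rmult_le_compat_l; [exact: Rabs_pos | exact: H1].
have Hnh : N h <= N x * q.
  have -> : N h = N (fun i => x i + (fun i => (- a) * e i) i) by apply: N_ext => i; rewrite /h; ring.
  apply: Rle_trans; first exact: N_tri.
  rewrite N_scale // Rabs_Ropp.
  have : Rabs a * N e <= N x / d * N e.
    apply: Rmult_le_compat_r => //.
    apply (Rmult_le_reg_l d) => //. rewrite /Rdiv -Rmult_assoc (Rmult_comm d (N x)) Rmult_assoc Rinv_r; lra.
  rewrite /q; have -> : N x * (1 + N e / d) = N x + N x / d * N e by field; lra.
  lra.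
move=> j.
case: (eqVneq j jk) => [->|Hne].
  apply: Rle_trans Ha; apply: Rmult_le_compat_r; [exact: Rabs_pos | exact: Rmin_l].
have Exj : x j = h j by rewrite /h /e /ev (negbTE Hne); ring.
rewrite Exj.
have H1 := Hc h Hh j.
apply: Rle_trans (_ : c / q * Rabs (h j) <= N x).
  apply: Rmult_le_compat_r; [exact: Rabs_pos | exact: Rmin_r].
apply (Rmult_le_reg_l q); first lra.
have -> : q * (c / q * Rabs (h j)) = c * Rabs (h j) by field; lra.
rewrite Rmult_comm; lra.
Qed.

Lemma N_lb : exists c, 0 < c /\ forall x j, c * Rabs (x j) <= N x.
Proof.
suff H : forall k, (k <= n)%N -> exists c, 0 < c /\ forall x, Hk k x -> forall j, c * Rabs (x j) <= N x.
  have [c [c0 Hc]] := H n (leqnn n).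
  exists c; split => // x j; apply: Hc => i Hi; exfalso.
  by have := ltn_ord i; rewrite ltnNge Hi.
elim => [_|k IH Hk1].
  exists 1; split; first lra.
  move=> x Hx j; rewrite Hx // Rabs_R0 Rmult_0_r; exact: N_pos.
apply: (lb_step Hk1); apply: IH; exact: ltnW.
Qed.

End Lower2.

Lemma N_sumg n (N : vec n -> R) (HN : is_norm N) (I : Type) (r : seq I) (F : I -> vec n) :
  N (fun i => \big[Rplus/0]_(j <- r) F j i) <= \big[Rplus/0]_(j <- r) N (F j).
Proof.
elim: r => [|a r IH].
  rewrite big_nil N_0 //; first lra. by move=> i; rewrite big_nil.
rewrite big_cons (@N_ext _ N _ (fun i => F a i + (fun i => \big[Rplus/0]_(j <- r) F j i) i)).
  apply: Rle_trans; first exact: N_tri. lra.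
by move=> i; rewrite big_cons.
Qed.

Lemma sum_const_ord K (c : R) : \big[Rplus/0]_(k < K) c = INR K * c.
Proof. elim: K => [|K IH]; first by rewrite big_ord0 /=; ring. rewrite big_ord_recr IH S_INR /=; ring. Qed.

Lemma unif01 (Q : R -> R -> Prop) :
  (forall s d d', Q s d -> 0 < d' <= d -> Q s d') ->
  (forall b, 0 <= b <= 1 -> exists r, 0 < r /\ exists d, 0 < d /\
      forall s, 0 <= s <= 1 -> Rabs (s - b) < r -> Q s d) ->
  exists d, 0 < d /\ forall s, 0 <= s <= 1 -> Q s d.
Proof.
move=> Hmon Hloc.
pose E a := 0 <= a <= 1 /\ exists d, 0 < d /\ forall s, 0 <= s <= a -> Q s d.
have E0 : E 0.
  have [r [r0 [d [d0 Hd]]]] := Hloc 0 ltac:(lra).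
  split; first lra. exists d; split => // s Hs; apply: Hd; first lra.
  have -> : s - 0 = 0 by lra. by rewrite Rabs_R0.
have Hb : bound E by exists 1 => a [Ha _]; lra.
have [b [Hub Hlub]] := @completeness E Hb (ex_intro _ 0 E0).
have b0 : 0 <= b by apply: Hub.
have b1 : b <= 1 by apply: Hlub => a [Ha _]; lra.
have [r [r0 [db [db0 Hdb]]]] := Hloc b ltac:(lra).
have [a [[Ea1 [da [da0 Hda]]] Hab]] : exists a, E a /\ b - r < a.
  apply: NNPP => Hno; have : b <= b - r; last lra.
  apply: Hlub => a Ea; apply: Rnot_lt_le => H; apply: Hno; by exists a.
have Hdd : 0 < Rmin da db by apply: Rmin_pos.
pose a' := Rmin 1 (b + r / 2).
have Ea' : E a'.
  split; first by rewrite /a'; split; [apply: Rmin_glb; lra | apply: Rmin_l].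
  exists (Rmin da db); split => // s Hs.
  case: (Rle_dec s a) => Hsa.
    apply: Hmon (Hda s ltac:(lra)) _; split => //; exact: Rmin_l.
  apply: Hmon (Hdb s _ _) _.
  - have := Rmin_l 1 (b + r / 2); rewrite -/a'; lra.
  - have := Rmin_r 1 (b + r / 2); rewrite -/a'; move=> H.
    apply: Rabs_def1; lra.
  - split => //; exact: Rmin_r.
have Ha'b : a' <= b by apply: Hub.
rewrite /a' in Ea' Ha'b.
move: Ea' Ha'b; rewrite /Rmin; case: Rle_dec => H Ea' Hab'.
  case: Ea' => _ [d [d0 Hd]]; exists d; split => //.
lra.
Qed.

Lemma mvt1 (phi dphi : R -> R) (a u D eps : R) :
  (forall c, derivable_pt_lim phi c (dphi c)) ->
  (forall c, Rmin a (a + u) <= c <= Rmax a (a + u) -> Rabs (dphi c - D) <= eps) ->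
  Rabs (phi (a + u) - phi a - D * u) <= eps * Rabs u.
Proof.
move=> Hd Hb.
case: (Rtotal_order u 0) => [Hu|[Hu|Hu]].
- have Hlt : a + u < a by lra.
  have [c [Hc1 Hc2]] : exists c, phi a - phi (a + u) = dphi c * (a - (a + u)) /\ a + u < c < a.
    by apply: MVT_cor2 => // c _; apply: Hd.
  have Hc : Rabs (dphi c - D) <= eps.
    apply Hb; unfold Rmin, Rmax; repeat destruct Rle_dec; lra.
  have -> : phi (a + u) - phi a - D * u = (dphi c - D) * u.
    replace (a - (a + u)) with (- u) in Hc1 by ring. lra.
  rewrite Rabs_mult; apply: Rmult_le_compat_r => //; exact: Rabs_pos.
- rewrite Hu Rplus_0_r Rabs_R0; have -> : phi a - phi a - D * 0 = 0 by ring.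
  rewrite Rabs_R0; lra.
- have Hlt : a < a + u by lra.
  have [c [Hc1 Hc2]] : exists c, phi (a + u) - phi a = dphi c * (a + u - a) /\ a < c < a + u.
    by apply: MVT_cor2 => // c _; apply: Hd.
  have Hc : Rabs (dphi c - D) <= eps.
    apply Hb; unfold Rmin, Rmax; repeat destruct Rle_dec; lra.
  have -> : phi (a + u) - phi a - D * u = (dphi c - D) * u.
    replace (a + u - a) with u in Hc1 by ring. lra.
  rewrite Rabs_mult; apply: Rmult_le_compat_r => //; exact: Rabs_pos.
Qed.

Lemma upd_same (I : eqType) (p : I -> R) i : upd p i (p i) = p.
Proof. apply: functional_extensionality => j; rewrite /upd; case: eqP => [->|] //. Qed.

Lemma upd_upd (I : eqType) (p : I -> R) i a b : upd (upd p i a) i b = upd p i b.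
Proof. apply: functional_extensionality => j; rewrite /upd; by case: eqP. Qed.

Lemma upd_at (I : eqType) (p : I -> R) i a : upd p i a i = a.
Proof. by rewrite /upd eqxx. Qed.

Lemma sum_k n (F : 'I_n -> R) k (kn : (k < n)%N) :
  \big[Rplus/0]_(j < n | (j < k.+1)%N) F j =
  \big[Rplus/0]_(j < n | (j < k)%N) F j + F (Ordinal kn).
Proof.
rewrite (bigD1 (Ordinal kn)) /=; last by rewrite ltnSn.
rewrite Rplus_comm; congr Rplus; apply: eq_bigl => j.
case E: (j == Ordinal kn).
  by move/eqP: E => -> /=; rewrite ltnn andbF.
rewrite andbT ltnS leq_eqVlt.
have Hne : (nat_of_ord j == k) = false.
  apply/negP => /eqP H; move/negP: E; apply; apply/eqP; apply: val_inj; by rewrite /= H.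
by rewrite Hne.
Qed.

Lemma mvt_tel n (G : vec n -> R) (dG : 'I_n -> vec n -> R) (p u : vec n) eps :
  (forall j z, derivable_pt_lim (fun h => G (upd z j h)) (z j) (dG j z)) ->
  (forall q, (forall j, Rabs (q j - p j) <= Rabs (u j)) -> forall j, Rabs (dG j q - dG j p) <= eps) ->
  Rabs (G (fun j => p j + u j) - G p - \big[Rplus/0]_(j < n) (dG j p * u j))
    <= eps * \big[Rplus/0]_(j < n) Rabs (u j).
Proof.
move=> Hd Hb.
pose w k := fun j : 'I_n => p j + (if (j < k)%N then u j else 0).
suff H : forall k, (k <= n)%N ->
   Rabs (G (w k) - G p - \big[Rplus/0]_(j < n | (j < k)%N) (dG j p * u j))
    <= eps * \big[Rplus/0]_(j < n | (j < k)%N) Rabs (u j).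
  have := H n (leqnn n).
  have -> : w n = (fun j => p j + u j).
    by apply: functional_extensionality => j; rewrite /w ltn_ord.
  have E1 : \big[Rplus/0]_(j < n | (j < n)%N) (dG j p * u j) = \big[Rplus/0]_(j < n) (dG j p * u j).
    by apply: eq_bigl => j; rewrite ltn_ord.
  have E2 : \big[Rplus/0]_(j < n | (j < n)%N) Rabs (u j) = \big[Rplus/0]_(j < n) Rabs (u j).
    by apply: eq_bigl => j; rewrite ltn_ord.
  by rewrite E1 E2.
elim => [_|k IH kn].
  have -> : w 0%N = p by apply: functional_extensionality => j; rewrite /w /=; ring.
  rewrite !big_pred0 // Rmult_0_r.
  have -> : G p - G p - 0 = 0 by ring. rewrite Rabs_R0; lra.
have IH' := IH (ltnW kn).
rewrite !(sum_k _ kn).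
set jk := Ordinal kn.
have Ew : w k.+1 = upd (w k) jk (p jk + u jk).
  apply: functional_extensionality => j; rewrite /w /upd.
  case: eqP => [->|Hne]; first by rewrite /= ltnSn.
  rewrite ltnS leq_eqVlt; case: eqP => [E|_] //=.
  by exfalso; apply: Hne; apply: val_inj; rewrite /= E.
have Ewk : w k = upd (w k) jk (p jk).
  apply: functional_extensionality => j; rewrite /upd; case: eqP => [->|] //.
  by rewrite /w /= ltnn Rplus_0_r.
have Hm : Rabs (G (upd (w k) jk (p jk + u jk)) - G (upd (w k) jk (p jk)) - dG jk p * u jk)
           <= eps * Rabs (u jk).
  apply (@mvt1 (fun h => G (upd (w k) jk h)) (fun c => dG jk (upd (w k) jk c))).
    move=> c; have := Hd jk (upd (w k) jk c).
    have -> : (fun h => G (upd (upd (w k) jk c) jk h)) = fun h => G (upd (w k) jk h).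
      by apply: functional_extensionality => h; rewrite upd_upd.
    by rewrite upd_at.
  move=> c Hc; apply: Hb => j.
  rewrite /upd; case: eqP => [->|Hne].
    move: Hc; rewrite /Rmin /Rmax; repeat destruct Rle_dec; move=> Hc; apply: Rabs_le; split.
    all: try (have := Rle_abs (u jk); have := Rle_abs (- u jk); rewrite Rabs_Ropp; lra).
  rewrite /w; case: (j < k)%N; rewrite ?Rplus_0_r.
    replace (p j + u j - p j) with (u j) by ring; lra.
  rewrite Rminus_diag Rabs_R0; exact: Rabs_pos.
rewrite Ew.
have EG : G (upd (w k) jk (p jk)) = G (w k) by rewrite -Ewk.
rewrite EG in Hm.
have -> : G (upd (w k) jk (p jk + u jk)) - G p -
   (\big[Rplus/0]_(j < n | (j < k)%N) (dG j p * u j) + dG jk p * u jk) =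
   (G (upd (w k) jk (p jk + u jk)) - G (w k) - dG jk p * u jk) +
   (G (w k) - G p - \big[Rplus/0]_(j < n | (j < k)%N) (dG j p * u j)) by ring.
apply: Rle_trans; first apply: Rabs_triang.
rewrite Rmult_plus_distr_l. lra.
Qed.

Section OSL.
Variable n : nat.
Variable F : vec n -> vec n.
Variable Jf : 'I_n -> 'I_n -> vec n -> R.
Hypothesis HJ : forall i j z, derivable_pt_lim (fun h => F (upd z j h) i) (z j) (Jf i j z).
Hypothesis Hcont : forall i j z eps, 0 < eps -> exists d, 0 < d /\
  forall z', (forall k, Rabs (z' k - z k) < d) -> Rabs (Jf i j z' - Jf i j z) < eps.

Lemma UD (y v : vec n) (rho : R) : 0 < rho ->
  exists d, 0 < d /\ forall s, 0 <= s <= 1 -> forall u : vec n, (forall k, Rabs (u k) < d) ->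
    forall i, Rabs (F (fun k => (y k + s * v k) + u k) i - F (fun k => y k + s * v k) i
                    - \big[Rplus/0]_(j < n) (Jf i j (fun k => y k + s * v k) * u j))
              <= rho * \big[Rplus/0]_(j < n) Rabs (u j).
Proof.
move=> rho0.
pose Vs := \big[Rplus/0]_(k < n) Rabs (v k).
have Vs0 : 0 <= Vs by apply: sum_nonneg => k; apply: Rabs_pos.
have Hv : forall k, Rabs (v k) <= Vs.
  move=> k; rewrite /Vs (bigD1 k) //=; apply: le_addr_nonneg.
  elim/big_ind: _ => //; [lra | move=> *; lra | move=> l _; apply: Rabs_pos].
apply (@unif01 (fun s d => forall u : vec n, (forall k, Rabs (u k) < d) ->
    forall i, Rabs (F (fun k => (y k + s * v k) + u k) i - F (fun k => y k + s * v k) i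
                    - \big[Rplus/0]_(j < n) (Jf i j (fun k => y k + s * v k) * u j))
              <= rho * \big[Rplus/0]_(j < n) Rabs (u j))).
  move=> s d d' H [d'0 d'd] u Hu; apply: H => k; have := Hu k; lra.
move=> b Hb.
pose zb := fun k => y k + b * v k.
have Hij : forall i, exists d, 0 < d /\ forall h, 0 < h < d -> forall j,
     forall z', (forall k, Rabs (z' k - zb k) < h) -> Rabs (Jf i j z' - Jf i j zb) < rho / 2.
  move=> i; apply (@fin_delta n (fun j h => forall z', (forall k, Rabs (z' k - zb k) < h) ->
                 Rabs (Jf i j z' - Jf i j zb) < rho / 2)) => j.
  have [d [d0 Hd]] := Hcont i j zb (eps := rho / 2) ltac:(lra).
  exists d; split => // h [h0 hd] z' Hz; apply: Hd => k; have := Hz k; lra.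
have [r [r0 Hr]] := fin_delta Hij.
have Hr' : forall i j z', (forall k, Rabs (z' k - zb k) <= r / 2) -> Rabs (Jf i j z' - Jf i j zb) < rho / 2.
  move=> i j z' Hz; apply: (Hr (3 * r / 4)); first lra.
  move=> k; have := Hz k; lra.
exists (r / (4 * (Vs + 1))); split; first by apply: Rdiv_lt_0_compat; lra.
exists (r / 4); split; first lra.
move=> s Hs Hsb u Hu i.
have Hzs : forall k, Rabs ((y k + s * v k) - zb k) <= r / 4.
  move=> k; rewrite /zb; have -> : y k + s * v k - (y k + b * v k) = (s - b) * v k by ring.
  rewrite Rabs_mult.
  have : Rabs (s - b) * Rabs (v k) <= r / (4 * (Vs + 1)) * (Vs + 1).
    apply: Rmult_le_compat; try apply: Rabs_pos; first lra. have := Hv k; lra.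
  have -> : r / (4 * (Vs + 1)) * (Vs + 1) = r / 4 by field; lra.
  done.
apply: (mvt_tel (G := fun z => F z i) (dG := fun j => Jf i j)) => //.
move=> q Hq j.
have H1 : Rabs (Jf i j q - Jf i j zb) < rho / 2.
  apply: Hr' => k.
  have := Hq k; have := Hzs k; have := Hu k.
  have := Rabs_triang (q k - (y k + s * v k)) ((y k + s * v k) - zb k).
  have -> : q k - (y k + s * v k) + (y k + s * v k - zb k) = q k - zb k by ring.
  lra.
have H2 : Rabs (Jf i j (fun k => y k + s * v k) - Jf i j zb) < rho / 2.
  apply: Hr' => k; have := Hzs k; lra.
have := Rabs_triang (Jf i j q - Jf i j zb) (- (Jf i j (fun k => y k + s * v k) - Jf i j zb)).
rewrite Rabs_Ropp.
have -> : Jf i j q - Jf i j zb + - (Jf i j (fun k => y k + s * v k) - Jf i j zb) =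
   Jf i j q - Jf i j (fun k => y k + s * v k) by ring.
lra.
Qed.


Variable N : vec n -> R.
Hypothesis HN : is_norm N.
Variable lam : R.
Hypothesis Hmu : forall z eps, 0 < eps -> exists d, 0 < d /\ forall h, 0 < h < d -> forall w : vec n,
   N (fun i => w i + h * \big[Rplus/0]_(j < n) (Jf i j z * w j)) <= (1 + h * (- lam + eps)) * N w.

Lemma osl (x y : vec n) eps : 0 < eps -> exists d, 0 < d /\ forall h, 0 < h < d ->
  N (fun i => (x i - y i) + h * (F x i - F y i)) <=
    (1 + h * (- lam + eps)) * N (fun i => x i - y i) + h * eps.
Proof.
move=> eps0.
pose v := fun i => x i - y i.
pose Vs := \big[Rplus/0]_(k < n) Rabs (v k).
have Vs0 : 0 <= Vs by apply: sum_nonneg => k; apply: Rabs_pos.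
have Hv : forall k, Rabs (v k) <= Vs.
  move=> k; rewrite /Vs (bigD1 k) //=; apply: le_addr_nonneg.
  elim/big_ind: _ => //; [lra | move=> *; lra | move=> l _; apply: Rabs_pos].
have [U [U0 HU]] := N_ub HN.
pose rho := eps / ((U + 1) * (Vs + 1)).
have rho0 : 0 < rho by apply: Rdiv_lt_0_compat; nra.
have [du [du0 Hdu]] := UD y v rho0.
have [M HM] := INR_unbounded (Vs / du).
pose K := M.+1.
have HK : Vs / du < INR K by rewrite /K S_INR; lra.
have K0 : 0 < INR K by rewrite /K S_INR; have := pos_INR M; lra.
pose z (k : nat) := fun i => y i + (INR k / INR K) * v i.
pose u := fun i => v i / INR K.
have Hu : forall j, Rabs (u j) < du.
  move=> j; rewrite /u Rabs_divp //.
  apply (Rmult_lt_reg_r (INR K)) => //. rewrite /Rdiv Rmult_assoc Rinv_l; last lra.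
  rewrite Rmult_1_r. have := Hv j.
  have : Vs < du * INR K.
    apply (Rmult_lt_reg_r (/ du)); first by apply: Rinv_0_lt_compat.
    rewrite (Rmult_comm du) Rmult_assoc Rinv_r; lra.
  lra.
have Hsum_u : \big[Rplus/0]_(j < n) Rabs (u j) = Vs / INR K.
  rewrite /Vs /Rdiv sum_mull; apply: eq_bigr => j _; by rewrite /u Rabs_divp.
have Hr : forall k : 'I_K, forall i,
   Rabs (F (z k.+1) i - F (z k) i - \big[Rplus/0]_(j < n) (Jf i j (z k) * u j)) <= rho * (Vs / INR K).
  move=> k i.
  have Hs : 0 <= INR k / INR K <= 1.
    split; first by apply: Rmult_le_pos; [apply: pos_INR | left; apply: Rinv_0_lt_compat].
    apply (Rmult_le_reg_r (INR K)) => //. rewrite /Rdiv Rmult_assoc Rinv_l; last lra.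
    rewrite Rmult_1_r Rmult_1_l; apply: le_INR; apply/leP; exact: ltnW.
  have := Hdu _ Hs u Hu i.
  have -> : (fun k0 => y k0 + INR k / INR K * v k0 + u k0) = z k.+1.
    apply: functional_extensionality => j; rewrite /z /u S_INR; field; lra.
  by rewrite Hsum_u.
have Hm : forall k : 'I_K, exists d, 0 < d /\ forall h, 0 < h < d -> forall w : vec n,
   N (fun i => w i + h * \big[Rplus/0]_(j < n) (Jf i j (z k) * w j)) <= (1 + h * (- lam + eps)) * N w.
  move=> k; exact: Hmu.
have [d [d0 Hd]] := fin_delta Hm.
exists d; split => // h Hh.
pose T (k : 'I_K) := fun i => u i + h * (F (z k.+1) i - F (z k) i).
have Ez0 : z 0%N = y by apply: functional_extensionality => i; rewrite /z INR_0; field; lra.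
have EzK : z K = x by apply: functional_extensionality => i; rewrite /z /v; field; lra.
have E1 : N (fun i => (x i - y i) + h * (F x i - F y i)) =
          N (fun i => \big[Rplus/0]_(k <- index_enum 'I_K) T k i).
  apply: N_ext => i; rewrite /T big_split /= -(sum_mulr h) sum_const_ord.
  rewrite (sum_tele K (fun k => F (z k) i)) Ez0 EzK /u /v; field; lra.
rewrite E1.
apply: Rle_trans; first exact: N_sumg.
have Hnu : N u = N v / INR K.
  rewrite (@N_ext _ N u (fun i => (/ INR K) * v i)); last by move=> i; rewrite /u; field; lra.
  rewrite N_scale // Rabs_right; last by left; apply: Rinv_0_lt_compat.
  rewrite /Rdiv Rmult_comm //.
have HT : forall k : 'I_K, N (T k) <= (1 + h * (- lam + eps)) * N u + h * (U * (rho * (Vs / INR K))).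
  move=> k.
  pose r := fun i => F (z k.+1) i - F (z k) i - \big[Rplus/0]_(j < n) (Jf i j (z k) * u j).
  have -> : N (T k) = N (fun i => (fun i => u i + h * \big[Rplus/0]_(j < n) (Jf i j (z k) * u j)) i
                                 + (fun i => h * r i) i).
    apply: N_ext => i; rewrite /T /r; ring.
  apply: Rle_trans; first exact: N_tri.
  rewrite N_scale // Rabs_right; last lra.
  apply: Rplus_le_compat; first exact: Hd.
  apply: Rmult_le_compat_l; first lra.
  apply: HU => i; exact: Hr.
apply: Rle_trans; first (apply: sum_le; exact: HT).
rewrite sum_const_ord Hnu.
have HUr : U * (rho * Vs) <= eps.
  rewrite /rho; have -> : U * (eps / ((U + 1) * (Vs + 1)) * Vs) = eps * ((U * Vs) / ((U + 1) * (Vs + 1))) by field; nra.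
  have : U * Vs / ((U + 1) * (Vs + 1)) <= 1.
    apply (Rmult_le_reg_r ((U + 1) * (Vs + 1))); first nra.
    rewrite /Rdiv Rmult_assoc Rinv_l; nra.
  nra.
have -> : INR K * ((1 + h * (- lam + eps)) * (N v / INR K) + h * (U * (rho * (Vs / INR K)))) =
   (1 + h * (- lam + eps)) * N v + h * (U * (rho * Vs)) by field; lra.
have : h * (U * (rho * Vs)) <= h * eps by apply: Rmult_le_compat_l; lra.
rewrite /v; lra.
Qed.

End OSL.

Unset Implicit Arguments.

Definition contR (f : R -> R) (t : R) :=
  forall eps, 0 < eps -> exists d, 0 < d /\ forall s, Rabs (s - t) < d -> Rabs (f s - f t) < eps.

Lemma deriv_bound (f : R -> R) t l : derivable_pt_lim f t l ->
  forall eps, 0 < eps -> exists d, 0 < d /\ forall h, Rabs h < d ->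
    Rabs (f (t + h) - f t - h * l) <= eps * Rabs h.
Proof.
intros Hd eps He. destruct (Hd eps He) as [d Hd']. exists d. split; [apply cond_pos|].
intros h Hh. destruct (Req_dec h 0) as [->|Hn].
- rewrite Rplus_0_r. replace (f t - f t - 0 * l) with 0 by ring. rewrite Rabs_R0. lra.
- specialize (Hd' h Hn Hh).
  replace (f (t + h) - f t - h * l) with (((f (t + h) - f t) / h - l) * h) by (field; auto).
  rewrite Rabs_mult. apply Rmult_le_compat_r; [apply Rabs_pos|lra].
Qed.

Lemma deriv_contR (f : R -> R) t l : derivable_pt_lim f t l -> contR f t.
Proof.
intros Hd eps He. destruct (deriv_bound f t l Hd 1 ltac:(lra)) as [d [d0 Hb]].
exists (Rmin d (eps / (1 + Rabs l + 1))). split.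
{ apply Rmin_pos; auto. apply Rdiv_lt_0_compat; auto. pose proof (Rabs_pos l); lra. }
intros s Hs. pose proof (Rmin_l d (eps / (1 + Rabs l + 1))) as H1.
pose proof (Rmin_r d (eps / (1 + Rabs l + 1))) as H2.
specialize (Hb (s - t) ltac:(lra)). replace (t + (s - t)) with s in Hb by ring.
pose proof (Rabs_triang (f s - f t - (s - t) * l) ((s - t) * l)) as H3.
replace (f s - f t - (s - t) * l + (s - t) * l) with (f s - f t) in H3 by ring.
rewrite Rabs_mult in H3.
assert (H4 : Rabs (s - t) * (1 + Rabs l + 1) < eps).
{ pose proof (Rabs_pos l). assert (H5 : Rabs (s - t) < eps / (1 + Rabs l + 1)) by lra.
  apply (Rmult_lt_compat_r (1 + Rabs l + 1)) in H5; [|lra].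
  replace (eps / (1 + Rabs l + 1) * (1 + Rabs l + 1)) with eps in H5 by (field; lra). exact H5. }
pose proof (Rabs_pos (s - t)). pose proof (Rabs_pos l). nra.
Qed.

Lemma contR_plus f g t : contR f t -> contR g t -> contR (fun s => f s + g s) t.
Proof.
intros Hf Hg eps He. destruct (Hf (eps/2) ltac:(lra)) as [d1 [d10 H1]].
destruct (Hg (eps/2) ltac:(lra)) as [d2 [d20 H2]].
exists (Rmin d1 d2). split; [apply Rmin_pos; auto|]. intros s Hs. cbv beta.
pose proof (Rmin_l d1 d2). pose proof (Rmin_r d1 d2).
specialize (H1 s ltac:(lra)). specialize (H2 s ltac:(lra)).
pose proof (Rabs_triang (f s - f t) (g s - g t)) as Ht.
replace (f s - f t + (g s - g t)) with (f s + g s - (f t + g t)) in Ht by ring. lra.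
Qed.

Lemma contR_mult f g t : contR f t -> contR g t -> contR (fun s => f s * g s) t.
Proof.
intros Hf Hg eps He.
set (A := Rabs (f t) + 1). set (B := Rabs (g t) + 1).
assert (A0 : 0 < A) by (unfold A; pose proof (Rabs_pos (f t)); lra).
assert (B0 : 0 < B) by (unfold B; pose proof (Rabs_pos (g t)); lra).
destruct (Hf (Rmin 1 (eps / (2 * B))) ltac:(apply Rmin_pos; [lra| apply Rdiv_lt_0_compat; lra])) as [d1 [d10 H1]].
destruct (Hg (eps / (2 * (A + 1))) ltac:(apply Rdiv_lt_0_compat; lra)) as [d2 [d20 H2]].
exists (Rmin d1 d2). split; [apply Rmin_pos; auto|]. intros s Hs. cbv beta.
pose proof (Rmin_l d1 d2). pose proof (Rmin_r d1 d2).
specialize (H1 s ltac:(lra)). specialize (H2 s ltac:(lra)).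
pose proof (Rmin_l 1 (eps / (2 * B))). pose proof (Rmin_r 1 (eps / (2 * B))).
replace (f s * g s - f t * g t) with (f s * (g s - g t) + (f s - f t) * g t) by ring.
eapply Rle_lt_trans; [apply Rabs_triang|]. rewrite !Rabs_mult.
assert (Hfs : Rabs (f s) <= A + 1).
{ pose proof (Rabs_triang (f s - f t) (f t)) as Ht. replace (f s - f t + f t) with (f s) in Ht by ring. unfold A. lra. }
assert (T1 : Rabs (f s) * Rabs (g s - g t) <= (A + 1) * (eps / (2 * (A + 1)))).
{ apply Rmult_le_compat; try apply Rabs_pos; lra. }
assert (T2 : Rabs (f s - f t) * Rabs (g t) <= (eps / (2 * B)) * B).
{ apply Rmult_le_compat; try apply Rabs_pos; unfold B in *; lra. }
replace ((A + 1) * (eps / (2 * (A + 1)))) with (eps / 2) in T1 by (field; lra).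
replace (eps / (2 * B) * B) with (eps / 2) in T2 by (field; lra).
assert (Rabs (f s) * Rabs (g s - g t) < eps / 2 \/ Rabs (f s - f t) * Rabs (g t) < eps / 2 \/ (Rabs (f s) * Rabs (g s - g t) + Rabs (f s - f t) * Rabs (g t) < eps)).
{ right; right.
  assert (Rabs (f s - f t) * Rabs (g t) < eps / 2).
  { apply Rle_lt_trans with (Rabs (f s - f t) * B).
    - apply Rmult_le_compat_l; [apply Rabs_pos| unfold B; lra].
    - apply (Rmult_lt_reg_r (/ B)); [apply Rinv_0_lt_compat; lra|].
      rewrite Rmult_assoc Rinv_r; [|lra].
      replace (eps / 2 * / B) with (eps / (2 * B)) by (field; lra). lra. }
  lra. }
lra.
Qed.

Lemma deriv_lin a c s : derivable_pt_lim (fun s => a * (s - c)) s a.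
Proof.
intros eps He. exists (mkposreal 1 ltac:(lra)). intros h Hh _.
replace ((a * (s + h - c) - a * (s - c)) / h - a) with 0 by (field; auto).
rewrite Rabs_R0; lra.
Qed.

Lemma contR_exp_lin a c t : contR (fun s => exp (a * (s - c))) t.
Proof.
apply (deriv_contR _ t (exp (a * (t - c)) * a)).
apply (derivable_pt_lim_comp (fun s => a * (s - c)) exp t a (exp (a * (t - c)))).
- apply deriv_lin.
- apply derivable_pt_lim_exp.
Qed.

Lemma exp_ineq (x : R) : exp x * (1 - x) <= 1.
Proof.
destruct (Rle_dec (1 - x) 0) as [H|H].
- pose proof (exp_pos x). nra.
- pose proof (exp_ineq1_le (- x)) as H1.
  assert (exp x * exp (- x) = 1) by (rewrite -exp_plus; replace (x + - x) with 0 by ring; apply exp_0).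
  pose proof (exp_pos x). nra.
Qed.

Lemma cmp_eps (D : R -> R) t1 lam eps : 0 < lam -> 0 < eps ->
  (forall t, t1 <= t -> 0 <= D t) ->
  (forall t, t1 <= t -> contR D t) ->
  (forall t, t1 <= t -> forall e, 0 < e -> exists d, 0 < d /\ forall h, 0 < h < d ->
       D (t + h) <= (1 - lam * h) * D t + e * h) ->
  forall T, t1 <= T -> exp (lam * (T - t1)) * D T - D t1 - eps * (T - t1) <= 0.
Proof.
intros Hl He Hpos Hcont Hdini T HT.
set (phi := fun s => exp (lam * (s - t1)) * D s + (- D t1 - eps * (s - t1))).
enough (phi T <= 0) by (unfold phi in *; lra).
apply Rnot_lt_le. intros HTpos.
set (E := fun a => t1 <= a <= T /\ forall s, t1 <= s <= a -> phi s <= 0).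
assert (phi0 : phi t1 = 0).
{ unfold phi. replace (t1 - t1) with 0 by ring. rewrite Rmult_0_r exp_0. ring. }
assert (E0 : E t1).
{ split; [lra|]. intros s Hs. replace s with t1 by lra. lra. }
assert (Hb : bound E) by (exists T; intros a [Ha _]; lra).
destruct (completeness E Hb (ex_intro _ t1 E0)) as [b [Hub Hlub]].
assert (b1 : t1 <= b) by (apply Hub; exact E0).
assert (b2 : b <= T) by (apply Hlub; intros a [Ha _]; lra).
assert (Hbelow : forall s, t1 <= s < b -> phi s <= 0).
{ intros s Hs. apply NNPP. intros Hn.
  assert (b <= s); [|lra].
  apply Hlub. intros a [Ha Ha2]. apply Rnot_lt_le. intros Has.
  apply Hn. apply Ha2. lra. }
assert (Hphicont : contR phi b).
{ unfold phi.
  apply (contR_plus (fun s => exp (lam * (s - t1)) * D s) (fun s => - D t1 - eps * (s - t1))).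
  - apply contR_mult; [apply contR_exp_lin| apply Hcont; lra].
  - apply (deriv_contR _ b (- eps)).
    intros e0 He0. exists (mkposreal 1 ltac:(lra)). intros h Hh _.
    replace ((- D t1 - eps * (b + h - t1) - (- D t1 - eps * (b - t1))) / h - - eps) with 0 by (field; auto).
    rewrite Rabs_R0; lra. }
assert (Hphib : phi b <= 0).
{ destruct (Req_dec b t1) as [->|Hbt]; [lra|].
  apply Rnot_lt_le. intros Hp.
  destruct (Hphicont (phi b / 2) ltac:(lra)) as [d [d0 Hd]].
  set (s := b - Rmin d (b - t1) / 2).
  pose proof (Rmin_l d (b - t1)). pose proof (Rmin_r d (b - t1)).
  assert (Rmin d (b - t1) > 0) by (apply Rmin_pos; lra).
  specialize (Hd s ltac:(unfold s; rewrite Rabs_left; lra)).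
  specialize (Hbelow s ltac:(unfold s; lra)).
  apply Rabs_def2 in Hd. lra. }
assert (Hbt : b < T).
{ destruct (Req_dec b T) as [->|]; [lra|lra]. }
set (e' := eps * exp (- lam * (b - t1)) * exp (- lam)).
assert (e'0 : 0 < e') by (unfold e'; pose proof (exp_pos (- lam * (b - t1))); pose proof (exp_pos (-lam)); apply Rmult_lt_0_compat; [apply Rmult_lt_0_compat|]; lra).
destruct (Hdini b b1 e' e'0) as [d [d0 Hd]].
set (h0 := Rmin (Rmin d 1) (T - b) / 2).
pose proof (Rmin_l (Rmin d 1) (T - b)). pose proof (Rmin_r (Rmin d 1) (T - b)).
pose proof (Rmin_l d 1). pose proof (Rmin_r d 1).
assert (Rmin (Rmin d 1) (T - b) > 0) by (apply Rmin_pos; [apply Rmin_pos|]; lra).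
assert (Eb : E (b + h0)).
{ split; [unfold h0; lra|].
  intros s Hs.
  destruct (Rlt_dec s b) as [Hsb|Hsb]; [apply Hbelow; lra|].
  destruct (Req_dec s b) as [->|Hsb2]; [exact Hphib|].
  set (h := s - b).
  assert (Hh : 0 < h < d) by (unfold h, h0 in *; lra).
  assert (Hh1 : h <= 1) by (unfold h, h0 in *; lra).
  specialize (Hd h Hh).
  replace s with (b + h) by (unfold h; ring).
  unfold phi.
  assert (Eexp : exp (lam * (b + h - t1)) = exp (lam * (b - t1)) * exp (lam * h)).
  { rewrite -exp_plus. f_equal. ring. }
  rewrite Eexp.
  pose proof (exp_pos (lam * (b - t1))) as P1.
  pose proof (exp_pos (lam * h)) as P2.
  pose proof (exp_ineq (lam * h)) as P3.
  assert (P4 : exp (lam * h) <= exp lam).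
  { destruct (Req_dec h 1) as [->|]; [rewrite Rmult_1_r; lra|].
    left. apply exp_increasing. nra. }
  pose proof (Hpos b b1) as P5.
  assert (Hdb : exp (lam * (b - t1)) * exp (lam * h) * D (b + h) <=
                exp (lam * (b - t1)) * D b + eps * h).
  { apply Rle_trans with (exp (lam * (b - t1)) * exp (lam * h) * ((1 - lam * h) * D b + e' * h)).
    - apply Rmult_le_compat_l; [nra|exact Hd].
    - assert (Q1 : exp (lam * h) * (1 - lam * h) * D b <= D b) by nra.
      assert (Q2 : exp (lam * (b - t1)) * exp (lam * h) * e' <= eps).
      { unfold e'.
        assert (exp (lam * (b - t1)) * exp (- lam * (b - t1)) = 1) as R1.
        { rewrite -exp_plus. replace (lam * (b - t1) + - lam * (b - t1)) with 0 by ring. apply exp_0. }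
        assert (exp lam * exp (- lam) = 1) as R2.
        { rewrite -exp_plus. replace (lam + - lam) with 0 by ring. apply exp_0. }
        pose proof (exp_pos (- lam)). pose proof (exp_pos (- lam * (b - t1))).
        replace (exp (lam * (b - t1)) * exp (lam * h) * (eps * exp (- lam * (b - t1)) * exp (- lam)))
          with (eps * (exp (lam * (b - t1)) * exp (- lam * (b - t1))) * (exp (lam * h) * exp (- lam))) by ring.
        rewrite R1 Rmult_1_r.
        assert (exp (lam * h) * exp (- lam) <= 1) by nra.
        nra. }
      nra. }
  unfold phi in Hphib. nra. }
assert (b + h0 <= b) by (apply Hub; exact Eb).
unfold h0 in *. lra.
Qed.

Lemma cmp (D : R -> R) t1 lam : 0 < lam ->
  (forall t, t1 <= t -> 0 <= D t) ->
  (forall t, t1 <= t -> contR D t) ->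
  (forall t, t1 <= t -> forall e, 0 < e -> exists d, 0 < d /\ forall h, 0 < h < d ->
       D (t + h) <= (1 - lam * h) * D t + e * h) ->
  forall T, t1 <= T -> D T <= exp (- lam * (T - t1)) * D t1.
Proof.
intros Hl Hpos Hcont Hdini T HT.
assert (H : exp (lam * (T - t1)) * D T <= D t1).
{ apply Rnot_lt_le. intros Hn.
  destruct (Req_dec T t1) as [->|HTt].
  - replace (t1 - t1) with 0 in Hn by ring. rewrite Rmult_0_r exp_0 in Hn. lra.
  - set (eps := (exp (lam * (T - t1)) * D T - D t1) / (2 * (T - t1))).
    assert (eps0 : 0 < eps) by (unfold eps; apply Rdiv_lt_0_compat; lra).
    pose proof (cmp_eps D t1 lam eps Hl eps0 Hpos Hcont Hdini T HT) as Hc.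
    unfold eps in Hc.
    replace ((exp (lam * (T - t1)) * D T - D t1) / (2 * (T - t1)) * (T - t1))
      with ((exp (lam * (T - t1)) * D T - D t1) / 2) in Hc by (field; lra).
    lra. }
assert (exp (- lam * (T - t1)) * exp (lam * (T - t1)) = 1) as R1.
{ rewrite -exp_plus. replace (- lam * (T - t1) + lam * (T - t1)) with 0 by ring. apply exp_0. }
pose proof (exp_pos (- lam * (T - t1))).
apply Rmult_le_compat_l with (r := exp (- lam * (T - t1))) in H; [|lra].
rewrite -Rmult_assoc R1 Rmult_1_l in H. exact H.
Qed.

Set Implicit Arguments.

Definition ext n (z : vec n) (t : R) : option 'I_n -> R :=
  fun o => match o with Some j => z j | None => t end.

Lemma smooth_jac n (f : vec n -> R -> vec n) : smooth_field f ->
  exists Jt : R -> 'I_n -> 'I_n -> vec n -> R,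
   (forall t i j z, derivable_pt_lim (fun h => f (upd z j h) t i) (z j) (Jt t i j z)) /\
   (forall t i j z eps, 0 < eps -> exists d, 0 < d /\
      forall z', (forall k, Rabs (z' k - z k) < d) -> Rabs (Jt t i j z' - Jt t i j z) < eps).
Proof.
move=> Hs.
have H1 : forall i, exists dg : option 'I_n -> (option 'I_n -> R) -> R,
   (forall o p, derivable_pt_lim (fun h => f (fun j => upd p o h (Some j)) (upd p o h None) i) (p o) (dg o p)) /\
   forall o, cont_fun (dg o).
  move=> i; have := Hs i 1%nat; rewrite /= => [[_ [dg [Hd Hc]]]].
  by exists dg.
pose D i := proj1_sig (constructive_indefinite_description _ (H1 i)).
have HD : forall i, (forall o p, derivable_pt_lim (fun h => f (fun j => upd p o h (Some j)) (upd p o h None) i) (p o) (D i o p)) /\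
   forall o, cont_fun (D i o).
  move=> i; exact: (proj2_sig (constructive_indefinite_description _ (H1 i))).
exists (fun t i j z => D i (Some j) (ext z t)); split.
  move=> t i j z; have := (proj1 (HD i)) (Some j) (ext z t).
  have -> : (fun h => f (fun k => upd (ext z t) (Some j) h (Some k)) (upd (ext z t) (Some j) h None) i)
          = (fun h => f (upd z j h) t i).
    apply: functional_extensionality => h.
    have -> : (fun k => upd (ext z t) (Some j) h (Some k)) = upd z j h.
      by apply: functional_extensionality => k; rewrite /upd /=.
    by rewrite /upd /=.
  by [].
move=> t i j z eps He.
have [d [d0 Hd]] := (proj2 (HD i)) (Some j) (ext z t) eps He.
exists d; split => // z' Hz; apply: Hd => o; case: o => [k|] /=; first exact: Hz.
by rewrite Rminus_diag Rabs_R0.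
Qed.

Lemma mxv_id_plus n h (A : mat n) (w : vec n) i :
  mxv (id_plus h A) w i = w i + h * \big[Rplus/0]_(j < n) (A i j * w j).
Proof.
rewrite /mxv /id_plus.
have -> : \big[Rplus/0]_(j < n) (((if i == j then 1 else 0) + h * A i j) * w j) =
   \big[Rplus/0]_(j < n) (w j * ev j i + h * (A i j * w j)).
  apply: eq_bigr => j _; rewrite /ev; case: (eqVneq i j) => [->|H]; rewrite ?eqxx //; ring.
by rewrite sum_add sum_ev -sum_mulr.
Qed.

Lemma meas_bound n (N : vec n -> R) (HN : is_norm N) (j0 : 'I_n) (A : mat n) m :
  is_matrix_measure N A m -> forall eps, 0 < eps -> exists d, 0 < d /\ forall h, 0 < h < d ->
   forall w : vec n, N (fun i => w i + h * \big[Rplus/0]_(j < n) (A i j * w j)) <= (1 + h * (m + eps)) * N w.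
Proof.
move=> Hm eps He.
have [d [d0 Hd]] := Hm eps He.
exists d; split => // h Hh w.
pose B := id_plus h A.
pose E := fun r => exists x, N x = 1 /\ r = N (mxv B x).
have [c0 [c00 Hc0]] := N_lb HN.
have [U [U0 HU]] := N_ub HN.
pose SB := \big[Rplus/0]_(i < n) \big[Rplus/0]_(j < n) Rabs (B i j).
have SB0 : 0 <= SB by apply: sum_nonneg => i; apply: sum_nonneg => j; apply: Rabs_pos.
have Hbd : bound E.
  exists (U * (SB / c0)) => r [x [Hx ->]].
  apply: HU => i.
  have Hxj : forall j, Rabs (x j) <= / c0.
    move=> j; have := Hc0 x j; rewrite Hx => H.
    apply (Rmult_le_reg_l c0) => //; rewrite Rinv_r; lra.
  rewrite /mxv; apply: Rle_trans; first apply: Rabs_sum.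
  apply: Rle_trans (_ : \big[Rplus/0]_(j < n) (Rabs (B i j) * / c0) <= _).
    apply: sum_le => j; rewrite Rabs_mult; apply: Rmult_le_compat_l; [apply: Rabs_pos|exact: Hxj].
  rewrite -sum_mull /Rdiv; apply: Rmult_le_compat_r; first by left; apply: Rinv_0_lt_compat.
  rewrite /SB [X in _ <= X](bigD1 i) //=; apply: le_addr_nonneg.
  elim/big_ind: _ => //; [lra | move=> *; lra | move=> k _; apply: sum_nonneg => j; apply: Rabs_pos].
have Ne0 : 0 < N (ev j0).
  case: (N_pos HN (ev j0)) => // H; exfalso.
  have := N_zero HN (esym H) j0; rewrite /ev eqxx; lra.
have Hne : exists r, E r.
  exists (N (mxv B (fun i => / N (ev j0) * ev j0 i))), (fun i => / N (ev j0) * ev j0 i); split => //.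
  rewrite N_scale // Rabs_right; first by field; lra.
  by left; apply: Rinv_0_lt_compat.
have [c [Hcub Hclub]] := @completeness E Hbd Hne.
have Hc : is_opnorm N B c by [].
have Hcm := Hd h c Hh Hc.
have Hcle : c <= 1 + h * (m + eps).
  have := Rabs_def2 _ _ Hcm; move=> [H1 H2].
  have : (c - 1) / h < m + eps by lra.
  move=> H3; apply (Rmult_le_reg_r (/ h)); first by apply: Rinv_0_lt_compat; lra.
  have -> : (1 + h * (m + eps)) * / h = / h + (m + eps) by field; lra.
  have : (c - 1) / h = c * / h - / h by field; lra.
  lra.
case: (N_pos HN w) => Hw; last first.
  rewrite -Hw Rmult_0_r N_0 //; first lra.
  move=> i; rewrite !(N_zero HN (esym Hw)).
  rewrite big1; first ring. by move=> j _; rewrite (N_zero HN (esym Hw)); ring.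
pose x := fun i => / N w * w i.
have Hx : N x = 1 by rewrite /x N_scale // Rabs_right; [field; lra | left; apply: Rinv_0_lt_compat].
have H1 : N (mxv B x) <= c by apply: Hcub; exists x.
have H2 : N (mxv B x) = / N w * N (fun i => w i + h * \big[Rplus/0]_(j < n) (A i j * w j)).
  rewrite -(Rabs_right (/ N w)); last by left; apply: Rinv_0_lt_compat.
  rewrite -N_scale //; apply: N_ext => i; rewrite mxv_id_plus /x.
  rewrite /Rdiv; have -> : \big[Rplus/0]_(j < n) (A i j * (/ N w * w j)) = / N w * \big[Rplus/0]_(j < n) (A i j * w j).
    rewrite sum_mulr; apply: eq_bigr => j _; ring.
  ring.
rewrite H2 in H1.
have : N (fun i => w i + h * \big[Rplus/0]_(j < n) (A i j * w j)) <= c * N w.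
  apply (Rmult_le_reg_l (/ N w)); first by apply: Rinv_0_lt_compat.
  have -> : / N w * (c * N w) = c by field; lra.
  exact: H1.
move=> H3; apply: Rle_trans H3 _; apply: Rmult_le_compat_r => //; lra.
Qed.

Lemma deriv_sum (I : Type) (r : seq I) (F : I -> R -> R) (l : I -> R) t :
  (forall j, derivable_pt_lim (F j) t (l j)) ->
  derivable_pt_lim (fun s => \big[Rplus/0]_(j <- r) F j s) t (\big[Rplus/0]_(j <- r) l j).
Proof.
move=> Hd; elim: r => [|a r IH].
  have -> : (fun s => \big[Rplus/0]_(j <- [::]) F j s) = fct_cte 0.
    by apply: functional_extensionality => s; rewrite big_nil.
  rewrite big_nil; exact: derivable_pt_lim_const.
have -> : (fun s => \big[Rplus/0]_(j <- a :: r) F j s) = plus_fct (F a) (fun s => \big[Rplus/0]_(j <- r) F j s).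
  by apply: functional_extensionality => s; rewrite big_cons.
rewrite big_cons; exact: derivable_pt_lim_plus.
Qed.

Lemma deriv_mulc (f : R -> R) t l c : derivable_pt_lim f t l ->
  derivable_pt_lim (fun s => f s * c) t (l * c).
Proof.
move=> H; have := derivable_pt_lim_scal f c t l H.
have -> : mult_real_fct c f = fun s => f s * c.
  by apply: functional_extensionality => s; rewrite /mult_real_fct Rmult_comm.
by rewrite Rmult_comm.
Qed.

Lemma gam_sol n (f : vec n -> R -> vec n) (g : vec n -> vec n) x t0 :
  is_linear g -> equivariant f g -> is_solution f x t0 -> is_solution f (fun s => g (x s)) t0.
Proof.
move=> Hg He [Ht0 Hx]; split => // t Ht i.
have -> : (fun s => g (x s) i) = fun s => \big[Rplus/0]_(j <- index_enum 'I_n) (fun j s => x s j * g (ev j) i) j s.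
  apply: functional_extensionality => s; exact: lin_repr.
rewrite He; last lra.
rewrite (lin_repr _ _ Hg).
apply (@deriv_sum _ (index_enum 'I_n) (fun j s => x s j * g (ev j) i) (fun j => f (x t) t j * g (ev j) i)) => j.
apply: deriv_mulc; apply: Hx; exact: Ht.
Qed.

Section Dist.
Variable n : nat.
Variable N : vec n -> R.
Hypothesis HN : is_norm N.

Lemma N_rev (a b : vec n) : Rabs (N a - N b) <= N (fun i => a i - b i).
Proof.
have H0 : forall z : vec n, N (fun i => z i - 0) = N z by move=> z; apply: N_ext => i; ring.
have H1 := N_tri_sub HN a b (fun _ => 0).
have H2 := N_tri_sub HN b a (fun _ => 0).
rewrite !H0 in H1 H2.
rewrite (N_sym HN b a) in H2.
apply: Rabs_le; lra.
Qed.

Lemma D_cont (x y : R -> vec n) (t : R) :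
  (forall i, contR (fun s => x s i) t) -> (forall i, contR (fun s => y s i) t) ->
  contR (fun s => N (fun i => x s i - y s i)) t.
Proof.
move=> Hx Hy eps He.
have [U [U0 HU]] := N_ub HN.
pose e' := eps / (2 * (U + 1)).
have e'0 : 0 < e' by apply: Rdiv_lt_0_compat; lra.
have Hi : forall i, exists d, 0 < d /\ forall h, 0 < h < d -> forall s, Rabs (s - t) < h ->
   Rabs (x s i - x t i) < e' /\ Rabs (y s i - y t i) < e'.
  move=> i; have [d1 [d10 H1]] := Hx i e' e'0; have [d2 [d20 H2]] := Hy i e' e'0.
  exists (Rmin d1 d2); split; first exact: Rmin_pos.
  move=> h [h0 hd] s Hs; have := Rmin_l d1 d2; have := Rmin_r d1 d2; move=> *.
  split; [apply: H1 | apply: H2]; lra.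
have [d [d0 Hd]] := fin_delta Hi.
exists (d / 2); split; first lra.
move=> s Hs.
apply: Rle_lt_trans; first exact: N_rev.
have Hb : forall i, Rabs ((x s i - y s i) - (x t i - y t i)) <= 2 * e'.
  move=> i; have [A B] := Hd (d / 2 + Rabs (s - t)) ltac:(split; [have := Rabs_pos (s - t); lra | lra]) i s ltac:(lra).
  have -> : x s i - y s i - (x t i - y t i) = (x s i - x t i) + - (y s i - y t i) by ring.
  apply: Rle_trans; first exact: Rabs_triang. rewrite Rabs_Ropp; lra.
apply: Rle_lt_trans; first exact: HU Hb.
have -> : U * (2 * e') = eps * (U / (U + 1)) by rewrite /e'; field; lra.
have : U / (U + 1) < 1.
  apply (Rmult_lt_reg_r (U + 1)); first lra.
  rewrite /Rdiv Rmult_assoc Rinv_l; lra.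
nra.
Qed.

End Dist.

Lemma dini n (f : vec n -> R -> vec n) (N : vec n -> R) (HN : is_norm N) (lam : R)
  (Jt : R -> 'I_n -> 'I_n -> vec n -> R)
  (HJ : forall t i j z, derivable_pt_lim (fun h => f (upd z j h) t i) (z j) (Jt t i j z))
  (Hcont : forall t i j z eps, 0 < eps -> exists d, 0 < d /\
      forall z', (forall k, Rabs (z' k - z k) < d) -> Rabs (Jt t i j z' - Jt t i j z) < eps)
  (Hmu : forall t, 0 <= t -> forall z eps, 0 < eps -> exists d, 0 < d /\ forall h, 0 < h < d ->
     forall w : vec n, N (fun i => w i + h * \big[Rplus/0]_(j < n) (Jt t i j z * w j)) <= (1 + h * (- lam + eps)) * N w)
  (x y : R -> vec n) t0 (Hx : is_solution f x t0) (Hy : is_solution f y t0) t (Ht : t0 < t) :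
  forall eps, 0 < eps -> exists d, 0 < d /\ forall h, 0 < h < d ->
    N (fun i => x (t + h) i - y (t + h) i) <= (1 - lam * h) * N (fun i => x t i - y t i) + eps * h.
Proof.
move=> eps He.
have t0p : 0 <= t by case: Hx => H _; lra.
set D := N (fun i => x t i - y t i).
have D0 : 0 <= D by apply: N_pos.
have [U [U0 HU]] := N_ub HN.
pose e1 := eps / (2 * (D + 1)).
have e10 : 0 < e1 by apply: Rdiv_lt_0_compat; lra.
have [d1 [d10 Hd1]] := @osl n (fun z => f z t) (Jt t) (HJ t) (Hcont t) N HN lam (Hmu t t0p) (x t) (y t) e1 e10.
pose eta := eps / (4 * (U + 1)).
have eta0 : 0 < eta by apply: Rdiv_lt_0_compat; lra.
have Hi : forall i : 'I_n, exists d, 0 < d /\ forall h, 0 < h < d ->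
    Rabs (x (t + h) i - x t i - h * f (x t) t i) <= eta * h /\
    Rabs (y (t + h) i - y t i - h * f (y t) t i) <= eta * h.
  move=> i.
  have [da [da0 Ha]] := deriv_bound _ _ _ ((proj2 Hx) t Ht i) eta eta0.
  have [db [db0 Hb]] := deriv_bound _ _ _ ((proj2 Hy) t Ht i) eta eta0.
  exists (Rmin da db); split; first exact: Rmin_pos.
  move=> h [h0 hd]; have := Rmin_l da db; have := Rmin_r da db; move=> H1 H2.
  have Hh : Rabs h = h by apply: Rabs_right; lra.
  have A := Ha h ltac:(rewrite Hh; lra). have B := Hb h ltac:(rewrite Hh; lra).
  rewrite Hh in A B. split; [exact A|exact B].
have [d2 [d20 Hd2]] := fin_delta Hi.
exists (Rmin d1 d2); split; first exact: Rmin_pos.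
move=> h [h0 hd]; have := Rmin_l d1 d2; have := Rmin_r d1 d2; move=> H1 H2.
have Hosl := Hd1 h ltac:(lra).
have HR : N (fun i => (x (t + h) i - x t i - h * f (x t) t i) - (y (t + h) i - y t i - h * f (y t) t i))
          <= U * (2 * eta * h).
  apply: HU => i; have [A B] := Hd2 h ltac:(lra) i.
  apply: Rle_trans; first apply: Rabs_triang. rewrite Rabs_Ropp; lra.
have E : N (fun i => x (t + h) i - y (t + h) i) =
   N (fun i => (fun i => (x t i - y t i) + h * (f (x t) t i - f (y t) t i)) i +
               (fun i => (x (t + h) i - x t i - h * f (x t) t i) - (y (t + h) i - y t i - h * f (y t) t i)) i).
  apply: N_ext => i; ring.
rewrite E; apply: Rle_trans; first exact: N_tri.
rewrite -/D in Hosl.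
have HUe : U * (2 * eta * h) <= eps / 2 * h.
  rewrite /eta.
  have -> : U * (2 * (eps / (4 * (U + 1))) * h) = (eps / 2 * h) * (U / (U + 1)) by field; lra.
  have : U / (U + 1) <= 1.
    apply (Rmult_le_reg_r (U + 1)); first lra. rewrite /Rdiv Rmult_assoc Rinv_l; lra.
  have : 0 <= eps / 2 * h by apply: Rmult_le_pos; lra.
  nra.
have He1 : h * e1 * D + h * e1 <= eps / 2 * h.
  rewrite /e1; have -> : h * (eps / (2 * (D + 1))) * D + h * (eps / (2 * (D + 1))) = eps / 2 * h by field; lra.
  lra.
have : (1 + h * (- lam + e1)) * D + h * e1 = (1 - lam * h) * D + (h * e1 * D + h * e1) by ring.
lra.
Qed.

Lemma case2 (n s : nat) (f : vec n -> R -> vec n) (gam : 'I_s -> vec n -> vec n) :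
  smooth_field f ->
  (forall i, is_linear (gam i)) ->
  (forall i, equivariant f (gam i)) ->
  contracting f ->
  forall (x : R -> vec n) (t0 : R), is_solution f x t0 -> converges_to x (Mcap gam).
Proof.
move=> Hsm Hlin Heq [N [lam [HN [lam0 Hc]]]] x t0 Hx.
apply: final => // eps He.
case: (posnP n) => [n0|npos].
  exists 0 => t _ i l; exfalso; have := ltn_ord l; move: (nat_of_ord l) => k; by rewrite n0.
pose j0 := Ordinal npos.
have [Jt [HJ Hcont]] := smooth_jac Hsm.
have Hmu : forall t, 0 <= t -> forall z e, 0 < e -> exists d, 0 < d /\ forall h, 0 < h < d ->
     forall w : vec n, N (fun i => w i + h * \big[Rplus/0]_(j < n) (Jt t i j z * w j)) <= (1 + h * (- lam + e)) * N w.
  move=> t t0p z e He'.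
  have [m [Hm Hml]] := Hc z t (fun i j => Jt t i j z) t0p (fun i j => HJ t i j z).
  have [d [d0 Hd]] := meas_bound HN j0 Hm He'.
  exists d; split => // h Hh w; apply: Rle_trans; first exact: Hd.
  apply: Rmult_le_compat_r; first exact: N_pos. nra.
have [c0 [c00 Hc0]] := N_lb HN.
pose t1 := t0 + 1.
have t0p : 0 <= t0 by case: Hx.
apply (@fin_T s (fun i t => forall l, Rabs (gam i (x t) l - x t l) < eps)) => i.
pose y := fun t => gam i (x t).
have Hy : is_solution f y t0 by apply: gam_sol.
pose D := fun t => N (fun k => x t k - y t k).
have HD : forall T, t1 <= T -> D T <= exp (- lam * (T - t1)) * D t1.
  apply: cmp => //.
  - move=> t _; exact: N_pos.
  - move=> t Ht; apply: D_cont => // k.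
      apply: deriv_contR; apply: (proj2 Hx); rewrite /t1 in Ht; lra.
    apply: deriv_contR; apply: (proj2 Hy); rewrite /t1 in Ht; lra.
  - move=> t Ht e He'.
    have := dini HN HJ Hcont Hmu Hx Hy (t := t) ltac:(rewrite /t1 in Ht; lra) He'.
    by [].
have [T HT] := exp_small (D t1 / c0 * exp (lam * t1)) lam0 He.
exists (Rmax T t1) => t Ht l.
have Ht1 : t1 <= t by have := Rmax_r T t1; lra.
have HtT : T <= t by have := Rmax_l T t1; lra.
have H1 := HD t Ht1.
have H2 := HT t HtT.
have H3 := Hc0 (fun k => x t k - y t k) l.
rewrite -/(D t) in H3.
rewrite Rabs_minus_sym.
have E : exp (- lam * (t - t1)) = exp (lam * t1) * exp (- lam * t).
  rewrite -exp_plus; congr exp; ring.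
rewrite E in H1.
have : c0 * Rabs (x t l - y t l) <= c0 * (D t1 / c0 * exp (lam * t1) * exp (- lam * t)).
  have -> : c0 * (D t1 / c0 * exp (lam * t1) * exp (- lam * t)) = exp (lam * t1) * exp (- lam * t) * D t1 by field; lra.
  lra.
move=> H4.
have H5 : Rabs (x t l - y t l) <= D t1 / c0 * exp (lam * t1) * exp (- lam * t).
  apply (Rmult_le_reg_l c0) => //.
rewrite /y in H5; lra.
Qed.

Unset Implicit Arguments.
Theorem theorem8 (n s : nat) (f : vec n -> R -> vec n) (gam : 'I_s -> vec n -> vec n) :
  smooth_field f ->
  (forall i, is_linear (gam i)) ->
  (forall i, equivariant f (gam i)) ->
  (exists v : vec n, Mcap gam v /\ exists j, v j <> 0) ->
  ((forall i, contracting_towards f (fix_space (gam i))) \/ contracting f) ->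
  forall (x : R -> vec n) (t0 : R), is_solution f x t0 -> converges_to x (Mcap gam).
Proof.
move=> Hsm Hlin Heq _ [H|H].
  exact: case1.
exact: case2.
Qed.
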